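(* For every Tychonoff space $X$, the following are equivalent: (1) $C_p(X)\models U_{fin}(\Gamma_f,\Gamma_f)$ for every $f\in C_p(X)$; (2) $X\models U_{fin}(\Gamma_F,\Gamma)$.
   Context: All spaces are Tychonoff; $C_p(X)$ is $C(X)$ with pointwise convergence topology. For $f\in C_p(X)$, $\Gamma_f$ is the family of infinite $A\subseteq C(X)$ with $f\notin A$ such that every neighbourhood of $f$ contains all but finitely many elements of $A$. $C_p(X)\models U_{fin}(\Gamma_f,\Gamma_f)$ means: for every sequence $(S_n)_{n\in\omega}$ of elements of $\Gamma_f$ there are finite $\mathcal F_n\subseteq S_n$ such that for every finite $K=\{x_1,\dots,x_k\}\subseteq X$ and $\varepsilon>0$ there is $n'$ such that for every $n>n'$ and each $j\le k$ some $g\in\mathcal F_n$ satisfies $|g(x_j)-f(x_j)|<\varepsilon$. Zero-set: $g^{-1}(0)$, $g\in C(X)$; cozero-set: its complement. A cover $\mathcal U$ of $X$ always means $X=\bigcup\mathcal U$, $X\notin\mathcal U$; $\gamma$-cover: infinite, each point in all but finitely many members. $\Gamma_F$: $\gamma$-covers $\mathcal U$ of $X$ by cozero-sets for which there are zero-sets $F(U)\subseteq U$ ($U\in\mathcal U$) with $\{F(U):U\in\mathcal U\}$ a $\gamma$-cover of $X$. $X\models U_{fin}(\Gamma_F,\Gamma)$: whenever $\mathcal U_n\in\Gamma_F$ ($n\in\omega$) and no $\mathcal U_n$ contains a finite subcover, there are finite $\mathcal F_n\subseteq\mathcal U_n$ such that each point of $X$ belongs to $\bigcup\mathcal F_n$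 for all but finitely many $n$. *)

(* Defs.v *)
From Stdlib Require Import Reals List.
Open Scope R_scope.
Set Implicit Arguments.

Record Topology := {
  carrier :> Type;
  is_open : (carrier -> Prop) -> Prop;
  open_full : is_open (fun _ => True);
  open_union : forall F : (carrier -> Prop) -> Prop,
      (forall U, F U -> is_open U) -> is_open (fun x => exists U, F U /\ U x);
  open_inter : forall U V, is_open U -> is_open V -> is_open (fun x => U x /\ V x)
}.

Definition R_open (V : R -> Prop) : Prop :=
  forall y, V y -> exists d, d > 0 /\ forall z, Rabs (z - y) < d -> V z.

Definition continuous {X : Topology} (g : X -> R) : Prop :=
  forall V, R_open V -> is_open X (fun x => V (g x)).

Definition tychonoff (X : Topology) : Prop :=
  (forall x : X, is_open X (fun y => y <> x)) /\
  (forall (C : X -> Prop) (x : X), is_open X (fun y => ~ C y) -> ~ C x ->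
     exists g : X -> R, continuous g /\ g x = 0 /\
       (forall y, C y -> g y = 1) /\ (forall y, 0 <= g y <= 1)).

Definition finite {T : Type} (A : T -> Prop) : Prop :=
  exists l : list T, forall a, A a -> In a l.
Definition infinite {T : Type} (A : T -> Prop) : Prop := ~ finite A.

(** Gamma_f in C_p(X): infinite A ⊆ C(X), f ∉ A, every (basic) pointwise
    neighbourhood of f contains all but finitely many elements of A *)
Definition Gamma_f {X : Topology} (f : X -> R) (A : (X -> R) -> Prop) : Prop :=
  (forall g, A g -> continuous g) /\ infinite A /\ ~ A f /\
  (forall (K : list X) (eps : R), eps > 0 ->
     finite (fun g => A g /\ ~ (forall x, In x K -> Rabs (g x - f x) < eps))).

Definition Cp_Ufin_Gf (X : Topology) (f : X -> R) : Prop :=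
  forall S : nat -> ((X -> R) -> Prop), (forall n, Gamma_f f (S n)) ->
  exists F : nat -> list (X -> R),
    (forall n g, In g (F n) -> S n g) /\
    (forall (K : list X) (eps : R), eps > 0 ->
       exists n', forall n, (n > n')%nat -> forall x, In x K ->
         exists g, In g (F n) /\ Rabs (g x - f x) < eps).

Definition zero_set {X : Topology} (Z : X -> Prop) : Prop :=
  exists g : X -> R, continuous g /\ forall x, Z x <-> g x = 0.
Definition cozero_set {X : Topology} (V : X -> Prop) : Prop :=
  exists g : X -> R, continuous g /\ forall x, V x <-> g x <> 0.

Definition is_cover {X : Topology} (U : (X -> Prop) -> Prop) : Prop :=
  (forall x : X, exists V, U V /\ V x) /\ ~ (exists V, U V /\ forall x, V x).

Definition gamma_cover {X : Topology} (U : (X -> Prop) -> Prop) : Prop :=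
  is_cover U /\ infinite U /\ (forall x : X, finite (fun V => U V /\ ~ V x)).

Definition Gamma_F {X : Topology} (U : (X -> Prop) -> Prop) : Prop :=
  gamma_cover U /\ (forall V, U V -> cozero_set V) /\
  exists F : (X -> Prop) -> (X -> Prop),
    (forall V, U V -> zero_set (F V) /\ (forall x, F V x -> V x)) /\
    gamma_cover (fun W => exists V, U V /\ W = F V).

Definition has_finite_subcover {X : Topology} (U : (X -> Prop) -> Prop) : Prop :=
  exists l : list (X -> Prop), (forall V, In V l -> U V) /\
    forall x : X, exists V, In V l /\ V x.

Definition X_Ufin_GF_G (X : Topology) : Prop :=
  forall Us : nat -> ((X -> Prop) -> Prop),
    (forall n, Gamma_F (Us n)) -> (forall n, ~ has_finite_subcover (Us n)) ->
    exists F : nat -> list (X -> Prop),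
      (forall n V, In V (F n) -> Us n V) /\
      (forall x : X, exists N, forall n, (n >= N)%nat -> exists V, In V (F n) /\ V x).

(* Main.v *)
Require Import Defs.
From Stdlib Require Import Reals List Lra Lia Classical ClassicalEpsilon FunctionalExtensionality PropExtensionality.
Open Scope R_scope.

Lemma open_ext {X:Topology} (P Q : X -> Prop) : is_open X P -> (forall x, P x <-> Q x) -> is_open X Q.
Proof. intros H E. replace Q with P; auto. apply functional_extensionality; intro x; apply propositional_extensionality; auto. Qed.

Lemma R_open_ball a d : R_open (fun z => Rabs (z - a) < d).
Proof. intros y Hy. exists (d - Rabs (y - a)). split. lra. intros z Hz.
  pose proof (Rabs_triang (z - y) (y - a)) as H. replace (z - y + (y - a)) with (z - a) in H by ring. lra. Qed.

Lemma cpt_id x : continuity_pt (fun t => t) x.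
Proof. apply derivable_continuous_pt; apply derivable_pt_id. Qed.

Lemma cont2 {X:Topology} (g1 g2 : X -> R) (h : R -> R -> R) :
  continuous g1 -> continuous g2 ->
  (forall x eps, eps > 0 -> exists d, d > 0 /\ forall u v, Rabs (u - g1 x) < d -> Rabs (v - g2 x) < d -> Rabs (h u v - h (g1 x) (g2 x)) < eps) ->
  continuous (fun x => h (g1 x) (g2 x)).
Proof.
  intros C1 C2 H V HV.
  set (Fam := fun W : X -> Prop => exists a b d, d > 0 /\ (forall u v, Rabs (u - a) < d -> Rabs (v - b) < d -> V (h u v)) /\ W = (fun x => Rabs (g1 x - a) < d /\ Rabs (g2 x - b) < d)).
  apply open_ext with (P := fun x => exists W, Fam W /\ W x).
  - apply open_union. intros W [a [b [d [Hd [HV' ->]]]]].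
    apply open_inter; [apply (C1 _ (R_open_ball a d)) | apply (C2 _ (R_open_ball b d))].
  - intro x; split.
    + intros [W [[a [b [d [Hd [HV' ->]]]]] [H1 H2]]]. apply HV'; auto.
    + intro Hx. destruct (HV _ Hx) as [e [He He']].
      destruct (H x e He) as [d [Hd Hd']].
      exists (fun y => Rabs (g1 y - g1 x) < d /\ Rabs (g2 y - g2 x) < d). split.
      * exists (g1 x), (g2 x), d. split; [auto|split; [|reflexivity]].
        intros u v Hu Hv. apply He'. apply Hd'; auto.
      * unfold Rminus; rewrite !Rplus_opp_r, Rabs_R0; lra.
Qed.

Lemma cont_comp1 {X:Topology} (g : X -> R) (h : R -> R) :
  continuous g -> (forall x, continuity_pt h (g x)) -> continuous (fun x => h (g x)).
Proof.
  intros C H. apply (cont2 g g (fun u _ => h u) C C).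
  intros x eps Heps. destruct (H x eps Heps) as [d [Hd Hd']].
  exists d; split; auto. intros u v Hu _.
  destruct (Req_dec u (g x)) as [->|Hne].
  - unfold Rminus; rewrite Rplus_opp_r, Rabs_R0; lra.
  - apply (Hd' u). split. split; [exact I | auto]. simpl; unfold R_dist; auto.
Qed.

Lemma cont_ext {X:Topology} {g h : X -> R} : continuous g -> (forall x, g x = h x) -> continuous h.
Proof. intros C E. replace h with g; auto. apply functional_extensionality; auto. Qed.

Lemma cont_lin {X:Topology} a b {g1 g2 : X -> R} : continuous g1 -> continuous g2 -> continuous (fun x => a * g1 x + b * g2 x).
Proof.
 intros C1 C2. apply (cont2 g1 g2 (fun u v => a*u+b*v) C1 C2).
 intros x eps He. pose proof (Rabs_pos a); pose proof (Rabs_pos b).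
 exists (eps / (Rabs a + Rabs b + 1)). split.
 - apply Rdiv_lt_0_compat; lra.
 - intros u v Hu Hv.
   replace (a*u+b*v - (a*g1 x + b*g2 x)) with (a*(u-g1 x) + b*(v - g2 x)) by ring.
   eapply Rle_lt_trans. apply Rabs_triang. rewrite !Rabs_mult.
   set (d := eps / (Rabs a + Rabs b + 1)) in *.
   assert (Hd: d * (Rabs a + Rabs b + 1) = eps) by (unfold d; field; lra).
   pose proof (Rabs_pos (u - g1 x)); pose proof (Rabs_pos (v - g2 x)).
   nra.
Qed.

Lemma cont_const {X:Topology} c : continuous (fun _ : X => c).
Proof. intros V HV. destruct (classic (V c)) as [Hc|Hc].
 - apply open_ext with (fun _ => True). apply open_full. intuition.
 - apply open_ext with (fun x => exists U : X -> Prop, False /\ U x). apply open_union; tauto. firstorder.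
Qed.

Lemma cont_sq {X:Topology} {g : X -> R} : continuous g -> continuous (fun x => g x * g x).
Proof. intro C. apply (cont_comp1 g (fun t => t * t) C). intro x.
  apply (continuity_pt_mult (fun t => t) (fun t => t)); apply cpt_id. Qed.

Lemma cont_mult {X:Topology} {g1 g2 : X -> R} : continuous g1 -> continuous g2 -> continuous (fun x => g1 x * g2 x).
Proof. intros C1 C2.
  pose proof (cont_sq (cont_lin 1 1 C1 C2)) as S1.
  pose proof (cont_sq (cont_lin 1 (-1) C1 C2)) as S2.
  apply (cont_ext (cont_lin (/4) (-/4) S1 S2)). intro x; simpl. field.
Qed.

Lemma cont_inv {X:Topology} {g : X -> R} : continuous g -> (forall x, g x <> 0) -> continuous (fun x => / g x).
Proof. intros C H. apply (cont_comp1 g (fun t => / t) C). intro x.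
  apply (continuity_pt_inv (fun t => t)); [apply cpt_id | apply H]. Qed.

Lemma cont_abs {X:Topology} {g : X -> R} : continuous g -> continuous (fun x => Rabs (g x)).
Proof. intro C. apply (cont_comp1 g Rabs C). intro x. apply Rcontinuity_abs. Qed.

Lemma cont_minus {X:Topology} {g1 g2 : X -> R} : continuous g1 -> continuous g2 -> continuous (fun x => g1 x - g2 x).
Proof. intros C1 C2. apply (cont_ext (cont_lin 1 (-1) C1 C2)). intro; simpl; ring. Qed.

Lemma cont_plus {X:Topology} {g1 g2 : X -> R} : continuous g1 -> continuous g2 -> continuous (fun x => g1 x + g2 x).
Proof. intros C1 C2. apply (cont_ext (cont_lin 1 1 C1 C2)). intro; simpl; ring. Qed.

Lemma cont_pp {X:Topology} {g : X -> R} c : continuous g -> continuous (fun x => (c - g x) + Rabs (c - g x)).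
Proof. intro C. apply cont_plus. apply cont_minus; auto; apply cont_const.
  apply cont_abs, cont_minus; auto; apply cont_const. Qed.

Lemma cont_pp2 {X:Topology} {g : X -> R} c : continuous g -> continuous (fun x => (g x - c) + Rabs (g x - c)).
Proof. intro C. apply cont_plus. apply cont_minus; auto; apply cont_const.
  apply cont_abs, cont_minus; auto; apply cont_const. Qed.

Lemma pp_ne y : y + Rabs y <> 0 <-> 0 < y.
Proof. destruct (Rle_lt_dec 0 y) as [H|H]; [rewrite Rabs_pos_eq by lra | rewrite Rabs_left by lra]; split; intro; lra. Qed.
Lemma pp_eq y : y + Rabs y = 0 <-> y <= 0.
Proof. destruct (Rle_lt_dec 0 y) as [H|H]; [rewrite Rabs_pos_eq by lra | rewrite Rabs_left by lra]; split; intro; lra. Qed.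

Lemma finite_sub {T} (A B : T -> Prop) : finite A -> (forall a, B a -> A a) -> finite B.
Proof. intros [l Hl] H. exists l; auto. Qed.
Lemma finite_union {T} (A B : T -> Prop) : finite A -> finite B -> finite (fun a => A a \/ B a).
Proof. intros [l1 H1] [l2 H2]. exists (l1 ++ l2). intros a [Ha|Ha]; apply in_or_app; auto. Qed.
Lemma finite_image {T U} (A : T -> Prop) (f : T -> U) : finite A -> finite (fun b => exists a, A a /\ b = f a).
Proof. intros [l Hl]. exists (map f l). intros b [a [Ha ->]]. apply in_map; auto. Qed.
Lemma finite_exact {T} {A : T -> Prop} : finite A -> exists l, (forall a, A a -> In a l) /\ (forall a, In a l -> A a).
Proof. intros [l Hl]. revert A Hl. induction l as [|a l IH]; intros A HA.
  - exists nil; split; [exact HA | intros a []].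
  - destruct (IH (fun b => A b /\ b <> a)) as [l' [H1 H2]].
    { intros b [Hb Hne]. destruct (HA b Hb); [congruence|auto]. }
    destruct (classic (A a)) as [Ha|Ha].
    + exists (a :: l'). split.
      * intros b Hb. destruct (classic (b = a)) as [E|E]; [left; auto | right; apply H1; auto].
      * intros b [<-|Hb]; auto; apply H2; auto.
    + exists l'. split.
      * intros b Hb. apply H1. split; auto. intros ->; auto.
      * intros b Hb; apply H2; auto.
Qed.
Lemma infinite_witness {T} (A Q : T -> Prop) : infinite A -> finite (fun a => A a /\ ~ Q a) -> exists a, A a /\ Q a.
Proof. intros HI HF. apply NNPP; intro Hn. apply HI. apply finite_sub with (1:=HF). intros a Ha; split; auto. intro Hq; apply Hn; eauto. Qed.
Lemma finite_list_union {T U} (l : list U) (P : U -> T -> Prop) : (forall u, In u l -> finite (P u)) -> finite (fun a => exists u, In u l /\ P u a).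
Proof. induction l as [|u l IH]; intro H.
  - exists nil. intros a [u [[] _]].
  - apply finite_sub with (fun a => P u a \/ exists u, In u l /\ P u a).
    + apply finite_union. apply H; left; auto. apply IH; intros; apply H; right; auto.
    + intros a [v [[<-|Hv] Ha]]; [left; auto| right; eauto].
Qed.

Definition cc (n:nat) : R := / INR (S n).
Lemma cc_pos n : cc n > 0.
Proof. unfold cc. apply Rinv_0_lt_compat, lt_0_INR; lia. Qed.

Definition Dset {X:Topology} (f : X -> R) n (g : X -> R) : X -> Prop := fun x => Rabs (g x - f x) < cc n.
Definition UsA {X:Topology} (f : X->R) (S : nat -> (X->R) -> Prop) n : (X -> Prop) -> Prop :=
  fun V => exists g, S n g /\ V = Dset f n g.
Definition gV {X:Topology} (f:X->R) S n (V : X -> Prop) : X -> R :=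
  epsilon (inhabits (fun _ : X => 0)) (fun g => S n g /\ V = Dset f n g).
Lemma gV_spec {X:Topology} {f:X->R} {S n V} : UsA f S n V -> S n (gV f S n V) /\ V = Dset f n (gV f S n V).
Proof. intro H. exact (epsilon_spec _ _ H). Qed.
Definition FA {X:Topology} (f:X->R) S n V : X -> Prop := fun x => Rabs (gV f S n V x - f x) <= cc n / 2.

Lemma A_bad {X:Topology} {f:X->R} {A : (X->R) -> Prop} : Gamma_f f A -> forall x e, e > 0 ->
  finite (fun g => A g /\ ~ Rabs (g x - f x) < e).
Proof. intros [_ [_ [_ H]]] x e He. apply finite_sub with (1 := H (x :: nil) e He).
  intros g [Hg Hn]; split; auto. intro H'; apply Hn; apply H'; left; auto. Qed.

Lemma A_gamma_V {X:Topology} {f:X->R} {S n} x : Gamma_f f (S n) -> finite (fun V => UsA f S n V /\ ~ V x).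
Proof. intro HS. apply finite_sub with (1 := @finite_image _ _ _ (Dset f n) (A_bad HS x _ (cc_pos n))).
  intros V [[g [Hg ->]] Hx]. exists g; auto. Qed.

Lemma A_gamma_F {X:Topology} {f:X->R} {S n} x : Gamma_f f (S n) -> finite (fun V => UsA f S n V /\ ~ FA f S n V x).
Proof. intro HS. assert (He : cc n / 2 > 0) by (pose proof (cc_pos n); lra).
  apply finite_sub with (1 := @finite_image _ _ _ (Dset f n) (A_bad HS x _ He)).
  intros V [HV Hx]. destruct (gV_spec HV) as [Hg HVe]. exists (gV f S n V). split; auto.
  split; auto. intro H; apply Hx; unfold FA; lra. Qed.

Lemma A_GammaF {X:Topology} (f:X->R) S n : continuous f -> Gamma_f f (S n) -> ~ has_finite_subcover (UsA f S n) ->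
  Gamma_F (UsA f S n).
Proof.
  intros Cf HS HP.
  assert (Hcov : forall x, exists V, UsA f S n V /\ V x).
  { intro x. pose proof HS as [Hc [Hinf _]].
    destruct (infinite_witness (S n) (fun g => Rabs (g x - f x) < cc n) Hinf (A_bad HS x _ (cc_pos n))) as [g [Hg Hgx]].
    exists (Dset f n g); split; [exists g; auto | exact Hgx]. }
  assert (HnX : ~ exists V, UsA f S n V /\ forall x, V x).
  { intros [V [HV Hall]]; apply HP; exists (V::nil); split.
    - intros W [<-|[]]; auto.
    - intros x; exists V; split; [left; auto| auto]. }
  assert (Hinf : infinite (UsA f S n)).
  { intro Hf. destruct (finite_exact Hf) as [l [l1 l2]]. apply HP. exists l. split; auto.
    intros x; destruct (Hcov x) as [V [HV Hx]]; exists V; auto. }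
  assert (Hcz : forall V, UsA f S n V -> continuous (gV f S n V)).
  { intros V HV. destruct (gV_spec HV) as [Hg _]. pose proof HS as [Hc _]; auto. }
  split; [split; [split; auto | split; auto] | split].
  - intro x. apply A_gamma_V; auto.
  - intros V [g [Hg ->]]. exists (fun x => (cc n - Rabs (g x - f x)) + Rabs (cc n - Rabs (g x - f x))). split.
    + apply cont_pp. apply cont_abs, cont_minus; auto. pose proof HS as [Hc _]; auto.
    + intro x. unfold Dset. rewrite pp_ne. split; intro; lra.
  - exists (FA f S n). split.
    + intros V HV. split.
      * exists (fun x => (Rabs (gV f S n V x - f x) - cc n / 2) + Rabs (Rabs (gV f S n V x - f x) - cc n / 2)).
        split. apply cont_pp2, cont_abs, cont_minus; auto.
        intro x. unfold FA. rewrite pp_eq. split; intro; lra.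
      * intros x Hx. destruct (gV_spec HV) as [_ HVe]. rewrite HVe. unfold FA, Dset in *.
        pose proof (cc_pos n); lra.
    + assert (HnXF : ~ (exists W, (exists V, UsA f S n V /\ W = FA f S n V) /\ forall x, W x)).
      { intros [W [[V [HV ->]] Hall]]. apply HnX. exists V; split; auto.
        intro x. destruct (gV_spec HV) as [_ HVe]. rewrite HVe. specialize (Hall x).
        unfold FA, Dset in *. pose proof (cc_pos n); lra. }
      split; [split|split].
      * intro x. destruct (infinite_witness (UsA f S n) (fun V => FA f S n V x) Hinf (A_gamma_F x HS)) as [V [HV Hx]].
        exists (FA f S n V); split; auto. exists V; auto.
      * exact HnXF.
      * intros [l Hl]. apply Hinf.
        apply finite_sub with (fun V => exists W, In W l /\ (UsA f S n V /\ FA f S n V = W)).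
        -- apply finite_list_union. intros W _.
           destruct (classic (exists x, ~ W x)) as [[x Hx]|Hno].
           ++ apply finite_sub with (1 := A_gamma_F x HS). intros V [HV <-]; auto.
           ++ exists nil. intros V [HV <-]. exfalso. apply HnXF. exists (FA f S n V). split.
              exists V; auto. intro x. apply NNPP; intro; apply Hno; eauto.
        -- intros V HV. exists (FA f S n V). split; auto. apply Hl. exists V; auto.
      * intro x. apply finite_sub with (1 := @finite_image _ _ _ (FA f S n) (A_gamma_F x HS)).
        intros W [[V [HV ->]] Hx]. exists V; auto.
Qed.

Lemma dirA (X:Topology) : X_Ufin_GF_G X -> forall f : X -> R, continuous f -> Cp_Ufin_Gf X f.
Proof.
  intros H2 f Cf S HS.
  set (Us := UsA f S).
  set (P := fun n => ~ has_finite_subcover (Us n)).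
  assert (HFL : exists FL : nat -> list (X -> Prop), (forall n V, P n -> In V (FL n) -> Us n V) /\ (forall x, exists N, forall n, (n >= N)%nat -> P n -> exists V, In V (FL n) /\ V x)).
  { destruct (classic (exists n0, P n0)) as [[n0 Hn0]|Hno].
    - set (Us' := fun n => if excluded_middle_informative (P n) then Us n else Us n0).
      destruct (H2 Us') as [FL [HFL1 HFL2]].
      + intro n; unfold Us'; destruct (excluded_middle_informative (P n)); apply A_GammaF; auto.
      + intro n; unfold Us'; destruct (excluded_middle_informative (P n)); auto.
      + exists FL; split.
        * intros n V Pn HV. specialize (HFL1 n V HV). unfold Us' in HFL1. destruct (excluded_middle_informative (P n)); tauto.
        * intros x; destruct (HFL2 x) as [N HN]; exists N; intros n Hn _; auto.
    - exists (fun _ => nil); split; [intros n V _ []| intro x; exists 0%nat; intros n _ Pn; exfalso; eauto]. }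
  destruct HFL as [FL [HFL1 HFL2]].
  set (subl := fun n => epsilon (inhabits (@nil (X -> Prop))) (fun l => (forall V, In V l -> Us n V) /\ forall x : X, exists V, In V l /\ V x)).
  assert (Hsub : forall n, ~ P n -> (forall V, In V (subl n) -> Us n V) /\ forall x : X, exists V, In V (subl n) /\ V x).
  { intros n Hn. unfold subl. apply epsilon_spec. apply NNPP; exact Hn. }
  set (Lsel := fun n => if excluded_middle_informative (P n) then FL n else subl n).
  assert (HL1 : forall n V, In V (Lsel n) -> Us n V).
  { intros n V. unfold Lsel. destruct (excluded_middle_informative (P n)) as [Hp|Hp].
    - apply HFL1; auto.
    - apply (Hsub n Hp). }
  assert (HL2 : forall x, exists N, forall n, (n >= N)%nat -> exists V, In V (Lsel n) /\ V x).
  { intro x. destruct (HFL2 x) as [N HN]. exists N. intros n Hn. unfold Lsel.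
    destruct (excluded_middle_informative (P n)) as [Hp|Hp]; auto. apply (Hsub n Hp). }
  exists (fun n => map (gV f S n) (Lsel n)). split.
  - intros n g Hg. apply in_map_iff in Hg. destruct Hg as [V [<- HV]]. apply (gV_spec (HL1 _ _ HV)).
  - intros K eps Heps.
    assert (HK : exists N, forall x, In x K -> forall n, (n >= N)%nat -> exists V, In V (Lsel n) /\ V x).
    { induction K as [|y K IH].
      - exists 0%nat; intros x [].
      - destruct IH as [N1 H1]. destruct (HL2 y) as [N2 H2'].
        exists (max N1 N2). intros x [<-|Hx] n Hn.
        + apply H2'; lia.
        + apply H1; auto; lia. }
    destruct HK as [N HN].
    destruct (archimed_cor1 eps Heps) as [M [HM HM0]].
    exists (max N M). intros n Hn x Hx.
    destruct (HN x Hx n) as [V [HV HVx]]; [lia|].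
    destruct (gV_spec (HL1 n V HV)) as [_ HVe].
    exists (gV f S n V). split. apply in_map; auto.
    rewrite HVe in HVx. unfold Dset in HVx.
    assert (cc n <= / INR M).
    { unfold cc; apply Rinv_le_contravar; [apply lt_0_INR; lia| apply le_INR; lia]. }
    lra.
Qed.

Definition phiZ {X:Topology} (Z : X -> Prop) : X -> R :=
  epsilon (inhabits (fun _ : X => 0)) (fun g => continuous g /\ forall x, Z x <-> g x = 0).
Definition psiB {X:Topology} (V : X -> Prop) : X -> R :=
  epsilon (inhabits (fun _ : X => 0)) (fun g => continuous g /\ forall x, V x <-> g x <> 0).
Definition GB {X:Topology} (Z V : X -> Prop) : X -> R :=
  fun x => Rabs (phiZ Z x) * / (Rabs (phiZ Z x) + Rabs (psiB V x)).

Lemma GB_props {X:Topology} (Z V : X -> Prop) : zero_set Z -> cozero_set V -> (forall x, Z x -> V x) ->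
  continuous (GB Z V) /\ (forall x, Z x -> GB Z V x = 0) /\ (forall x, ~ V x -> GB Z V x = 1) /\
  (forall x, V x -> GB Z V x < 1).
Proof.
  intros HZ HV HZV.
  destruct (epsilon_spec (inhabits (fun _ : X => 0)) _ HZ) as [Cphi Hphi]. fold (phiZ Z) in Cphi, Hphi.
  destruct (epsilon_spec (inhabits (fun _ : X => 0)) _ HV) as [Cpsi Hpsi]. fold (psiB V) in Cpsi, Hpsi.
  assert (Hpos : forall x, Rabs (phiZ Z x) + Rabs (psiB V x) > 0).
  { intro x. pose proof (Rabs_pos (phiZ Z x)); pose proof (Rabs_pos (psiB V x)).
    destruct (classic (V x)) as [Hx|Hx].
    - apply Hpsi in Hx. pose proof (Rabs_pos_lt _ Hx). lra.
    - assert (~ Z x) by auto. assert (phiZ Z x <> 0) by (intro E; apply H1; apply Hphi; auto).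
      pose proof (Rabs_pos_lt _ H2). lra. }
  split; [|split; [|split]].
  - apply cont_mult. apply cont_abs; auto. apply cont_inv.
    apply cont_plus; apply cont_abs; auto. intro x; specialize (Hpos x); lra.
  - intros x Hx. unfold GB. apply Hphi in Hx. rewrite Hx, Rabs_R0. ring.
  - intros x Hx. unfold GB. assert (psiB V x = 0) by (apply NNPP; intro E; apply Hx; apply Hpsi; auto).
    rewrite H, Rabs_R0, Rplus_0_r. apply Rinv_r. specialize (Hpos x). rewrite H, Rabs_R0 in Hpos. lra.
  - intros x Hx. unfold GB. apply Hpsi in Hx. pose proof (Rabs_pos_lt _ Hx). pose proof (Hpos x).
    set (a := Rabs (phiZ Z x)) in *. set (b := Rabs (psiB V x)) in *.
    assert (E : a * / (a + b) = 1 - b * / (a + b)) by (field; lra).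
    rewrite E. assert (b * / (a + b) > 0) by (apply Rmult_lt_0_compat; [lra | apply Rinv_0_lt_compat; lra]).
    lra.
Qed.

Definition FzB {X:Topology} (Us : nat -> (X->Prop) -> Prop) n : (X -> Prop) -> (X -> Prop) :=
  epsilon (inhabits (fun V : X -> Prop => V)) (fun F => (forall V, Us n V -> zero_set (F V) /\ (forall x, F V x -> V x)) /\
    gamma_cover (fun W => exists V, Us n V /\ W = F V)).
Lemma FzB_spec {X:Topology} {Us : nat -> (X->Prop) -> Prop} {n} : Gamma_F (Us n) ->
  (forall V, Us n V -> zero_set (FzB Us n V) /\ (forall x, FzB Us n V x -> V x)) /\
    gamma_cover (fun W => exists V, Us n V /\ W = FzB Us n V).
Proof. intros [_ [_ H]]. exact (epsilon_spec _ _ H). Qed.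

Definition repB {X:Topology} (Us : nat -> (X->Prop) -> Prop) n (W : X -> Prop) : X -> Prop :=
  epsilon (inhabits (fun _ : X => True)) (fun V => Us n V /\ FzB Us n V = W).
Definition U'B {X:Topology} (Us : nat -> (X->Prop) -> Prop) n (V : X -> Prop) : Prop :=
  Us n V /\ repB Us n (FzB Us n V) = V.
Definition S'B {X:Topology} (Us : nat -> (X->Prop) -> Prop) n (g : X -> R) : Prop :=
  exists V, U'B Us n V /\ g = GB (FzB Us n V) V.

Lemma repB_spec {X:Topology} {Us : nat -> (X->Prop) -> Prop} {n V} : Us n V ->
  U'B Us n (repB Us n (FzB Us n V)) /\ FzB Us n (repB Us n (FzB Us n V)) = FzB Us n V.
Proof. intro HV. assert (H : Us n (repB Us n (FzB Us n V)) /\ FzB Us n (repB Us n (FzB Us n V)) = FzB Us n V).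
  { apply (epsilon_spec _ (fun V0 => Us n V0 /\ FzB Us n V0 = FzB Us n V)). exists V; auto. }
  destruct H as [H1 H2]. split; auto. split; auto. rewrite H2. reflexivity. Qed.

Lemma GBn_props {X:Topology} {Us : nat -> (X->Prop) -> Prop} {n V} : Gamma_F (Us n) -> Us n V ->
  continuous (GB (FzB Us n V) V) /\ (forall x, FzB Us n V x -> GB (FzB Us n V) V x = 0) /\
  (forall x, ~ V x -> GB (FzB Us n V) V x = 1) /\ (forall x, V x -> GB (FzB Us n V) V x < 1).
Proof. intros HG HV. destruct (FzB_spec HG) as [H1 _]. destruct (H1 V HV) as [Hz Hs].
  apply GB_props; auto. destruct HG as [_ [Hc _]]. auto. Qed.

Lemma B_Gamma {X:Topology} {Us : nat -> (X->Prop) -> Prop} {n} : Gamma_F (Us n) -> Gamma_f (fun _ : X => 0) (S'B Us n).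
Proof.
  intro HG. pose proof (FzB_spec HG) as [HF [[HFcov HFnX] [HFinf HFgam]]].
  pose proof HG as [[[HUcov HUnX] [HUinf HUgam]] _].
  assert (HVeq : forall V, Us n V -> V = fun x => GB (FzB Us n V) V x < 1).
  { intros V HV. destruct (GBn_props HG HV) as [_ [_ [H3 H4]]].
    apply functional_extensionality; intro x; apply propositional_extensionality. split; auto.
    intro H. apply NNPP; intro Hx. rewrite (H3 x Hx) in H. lra. }
  assert (HU'inf : infinite (U'B Us n)).
  { intros [l Hl]. apply HFinf. exists (map (FzB Us n) l). intros W [V [HV ->]].
    destruct (repB_spec HV) as [H1 H2]. rewrite <- H2. apply in_map. apply Hl; auto. }
  split; [|split; [|split]].
  - intros g [V [[HV _] ->]]. apply (GBn_props HG HV).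
  - intros [l Hl]. apply HU'inf. exists (map (fun g => fun x => g x < 1) l). intros V HV.
    apply in_map_iff. exists (GB (FzB Us n V) V). split.
    + symmetry. apply HVeq. apply HV.
    + apply Hl. exists V; auto.
  - intros [V [[HV _] Heq]]. apply HUnX. exists V. split; auto. intro x.
    rewrite (HVeq V HV). rewrite <- Heq. lra.
  - intros K eps Heps.
    apply finite_sub with (fun g => exists V, (fun V => exists x, In x K /\ (U'B Us n V /\ ~ FzB Us n V x)) V /\ g = GB (FzB Us n V) V).
    + apply finite_image. apply finite_list_union. intros x _.
      apply finite_sub with (1 := @finite_image _ _ _ (repB Us n) (HFgam x)).
      intros V [[HV Hr] Hx]. exists (FzB Us n V). split; auto. split; auto. exists V; auto.
    + intros g [[V [HV ->]] Hn]. exists V. split; auto.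
      apply NNPP; intro Hno. apply Hn. intros x Hx.
      assert (FzB Us n V x) by (apply NNPP; intro; apply Hno; exists x; auto).
      destruct HV as [HV _]. destruct (GBn_props HG HV) as [_ [H2 _]]. rewrite (H2 x H).
      unfold Rminus; rewrite Rplus_opp_r, Rabs_R0; lra.
Qed.

Lemma dirB (X:Topology) : (forall f : X -> R, continuous f -> Cp_Ufin_Gf X f) -> X_Ufin_GF_G X.
Proof.
  intros H1 Us HG _.
  destruct (H1 (fun _ => 0) (cont_const 0) (S'B Us) (fun n => B_Gamma (HG n))) as [FL [HFL1 HFL2]].
  set (back := fun n g => epsilon (inhabits (fun _ : X => True)) (fun V => U'B Us n V /\ g = GB (FzB Us n V) V)).
  assert (Hback : forall n g, S'B Us n g -> U'B Us n (back n g) /\ g = GB (FzB Us n (back n g)) (back n g)).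
  { intros n g Hg. apply (epsilon_spec _ (fun V => U'B Us n V /\ g = GB (FzB Us n V) V)). exact Hg. }
  exists (fun n => map (back n) (FL n)). split.
  - intros n V HV. apply in_map_iff in HV. destruct HV as [g [<- Hg]].
    apply (Hback n g (HFL1 n g Hg)).
  - intro x. destruct (HFL2 (x :: nil) 1 Rlt_0_1) as [n' Hn'].
    exists (S n'). intros n Hn. destruct (Hn' n ltac:(lia) x (or_introl eq_refl)) as [g [Hg Hgx]].
    exists (back n g). split. apply in_map; auto.
    destruct (Hback n g (HFL1 n g Hg)) as [[HV _] Heq].
    apply NNPP; intro Hno. destruct (GBn_props (HG n) HV) as [_ [_ [H3 _]]].
    rewrite Heq, (H3 x Hno) in Hgx. rewrite Rminus_0_r, Rabs_R1 in Hgx. lra.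
Qed.

Theorem mainTheorem15 (X : Topology) (HX : tychonoff X) :
  (forall f : X -> R, continuous f -> Cp_Ufin_Gf X f) <-> X_Ufin_GF_G X.
Proof.
  split; [apply dirB | intros H f Hf; apply dirA; auto].
Qed.
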